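(* Let $D=[0,1]^2\setminus\{(0,0),(1,1)\}$ and let $J\colon D\to\mathbb{R}$ be a Jamesian function. Suppose there is a function $w\colon(0,1)\to(0,\infty)$ such that \[ J(a,b)=\frac{w(a)}{w(a)+w(b)}\quad\text{for all }a,b\in(0,1) \] (i.e. $J$ is derived from the Bradley--Terry model with worths depending on the winning percentages). Then $J$ coincides on all of $D$ with the James function $P(a,b)=\dfrac{a(1-b)}{a(1-b)+b(1-a)}$.
   Context: Let $D=[0,1]^2\setminus\{(0,0),(1,1)\}$. A function $J\colon D\to\mathbb{R}$ is called Jamesian if it satisfies, for all $(a,b)\in D$: (a) $J(a,\tfrac12)=a$; (b) $J(a,0)=1$ for $0<a\le 1$; (c) $J(b,a)=1-J(a,b)$; (d) $J(1-b,1-a)=J(a,b)$; (e) $J(a,b)$ is a non-decreasing function of $a$ for each $0\le b\le 1$ and a strictly increasing function of $a$ for each $0<b<1$. *)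

(* Defs.v *)
From Stdlib Require Import Reals.
Open Scope R_scope.

Definition inD (a b : R) : Prop :=
  0 <= a <= 1 /\ 0 <= b <= 1 /\ ~ (a = 0 /\ b = 0) /\ ~ (a = 1 /\ b = 1).

(* A function J : D -> R, represented as a total function R -> R -> R whose
   values off D are irrelevant; all axioms are imposed only on D. *)
Definition Jamesian (J : R -> R -> R) : Prop :=
  (* (a) *) (forall a, 0 <= a <= 1 -> J a (1/2) = a) /\
  (* (b) *) (forall a, 0 < a <= 1 -> J a 0 = 1) /\
  (* (c) *) (forall a b, inD a b -> J b a = 1 - J a b) /\
  (* (d) *) (forall a b, inD a b -> J (1 - b) (1 - a) = J a b) /\
  (forall b a1 a2, 0 <= b <= 1 -> inD a1 b -> inD a2 b -> a1 <= a2 ->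
     J a1 b <= J a2 b) /\
  (forall b a1 a2, 0 < b < 1 -> 0 <= a1 <= 1 -> 0 <= a2 <= 1 -> a1 < a2 ->
     J a1 b < J a2 b).

Definition James (a b : R) : R :=
  a * (1 - b) / (a * (1 - b) + b * (1 - a)).

(* Main.v *)
Require Import Defs.
From Stdlib Require Import Reals Lra Psatz.
Open Scope R_scope.

Theorem proposition4p1 (J : R -> R -> R) (w : R -> R) :
  Jamesian J ->
  (forall a, 0 < a < 1 -> 0 < w a) ->
  (forall a b, 0 < a < 1 -> 0 < b < 1 -> J a b = w a / (w a + w b)) ->
  forall a b, inD a b -> J a b = James a b.
Proof.
  intros HJ Hw HJw a b HD.
  destruct HJ as (Ha&Hb&Hc&Hd&_&_).
  assert (J1 : forall b, 0 <= b < 1 -> J 1 b = 1).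
  { intros c Hc1. pose proof (Hd (1-c) 0) as E.
    replace (1 - 0) with 1 in E by ring. replace (1 - (1 - c)) with c in E by ring.
    rewrite E; [apply Hb; lra|]. unfold inD; lra. }
  assert (Wf : forall x, 0 < x < 1 -> w x * (1 - x) = x * w (1/2)).
  { intros x Hx. pose proof (Ha x ltac:(lra)) as E. rewrite HJw in E by lra.
    pose proof (Hw x Hx). pose proof (Hw (1/2) ltac:(lra)).
    assert (w x = x * (w x + w (1/2))).
    { rewrite <- E at 2. field. lra. }
    nra. }
  destruct HD as (Ha01&Hb01&N00&N11).
  unfold James.
  destruct (Req_dec b 0) as [->|Hb0].
  { assert (a <> 0) by tauto. rewrite Hb by lra. field. lra. }
  destruct (Req_dec a 0) as [->|Ha0].
  { rewrite (Hc b 0) by (unfold inD; lra). rewrite Hb by lra. field. lra. }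
  destruct (Req_dec a 1) as [->|Ha1].
  { assert (b <> 1) by tauto. rewrite J1 by lra. field. lra. }
  destruct (Req_dec b 1) as [->|Hb1].
  { rewrite (Hc 1 a) by (unfold inD; lra). rewrite J1 by lra. field. lra. }
  assert (0 < a < 1) by lra. assert (0 < b < 1) by lra.
  rewrite HJw by lra.
  pose proof (Wf a ltac:(lra)). pose proof (Wf b ltac:(lra)).
  pose proof (Hw a ltac:(lra)). pose proof (Hw b ltac:(lra)).
  assert (0 < a * (1 - b) + b * (1 - a)) by nra.
  assert (E1 : w a * (1 - a) * b = a * w (1/2) * b) by (rewrite H1; ring).
  assert (E2 : w b * (1 - b) * a = b * w (1/2) * a) by (rewrite H2; ring).
  field_simplify_eq; [nra | lra].
Qed.
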